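(* Let $g$ be a nondegenerate symmetric bilinear form on $\mathbb{R}^n$, let $A$ be a $g$-symmetric endomorphism of $\mathbb{R}^n$ and let $\lambda$ be a real eigenvalue of $A$. Then $\big|\sigma\big(g|_{\mathrm{Ker}(A-\lambda)^n}\big)\big|\le\dim\mathrm{Ker}(A-\lambda)$. Moreover, the restriction of $g$ to the eigenspace $\mathrm{Ker}(A-\lambda)$ is nondegenerate if and only if the algebraic multiplicity $\dim\mathrm{Ker}(A-\lambda)^n$ and the geometric multiplicity $\dim\mathrm{Ker}(A-\lambda)$ of $\lambda$ coincide.
   Context: $g$ is not assumed positive definite; $A$ is $g$-symmetric if $g(Av,w)=g(v,Aw)$ for all $v,w$. For a subspace $W$, $g|_W$ is the restriction of $g$ to $W\times W$, and $\sigma$ of a symmetric bilinear form is its number of positive squares minus its number of negative squares. *)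

(* Defs.v *)
(* Conventions: vectors of R^n are row vectors 'rV[R]_n,
   an endomorphism A : 'M_n acts by v |-> v *m A, and the bilinear form with
   Gram matrix G is g(v,w) = v *m G *m w^T. *)
From HB Require Import structures.
From mathcomp Require Import all_boot all_order all_algebra.
From mathcomp Require Import reals.
Set Implicit Arguments. Unset Strict Implicit. Unset Printing Implicit Defensive.
Import Order.TTheory GRing.Theory Num.Theory.
Local Open Scope ring_scope.

Section Defs.
Variables (R : realType) (n : nat).

Definition bform (G : 'M[R]_n) (v w : 'rV[R]_n) : R := (v *m G *m w^T) 0 0.

Definition nondeg_sym_form (G : 'M[R]_n) : Prop :=
  G^T = G /\ G \in unitmx.

Definition g_symmetric (G A : 'M[R]_n) : Prop :=
  forall v w : 'rV[R]_n, bform G (v *m A) w = bform G v (w *m A).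

Definition nondeg_on (G : 'M[R]_n) (m : nat) (W : 'M[R]_(m, n)) : Prop :=
  forall v : 'rV[R]_n, (v <= W)%MS ->
    (forall w : 'rV[R]_n, (w <= W)%MS -> bform G v w = 0) -> v = 0.

Definition diag_basis (G : 'M[R]_n) (m : nat) (W : 'M[R]_(m, n))
    (k : nat) (B : 'M[R]_(k, n)) : Prop :=
  [/\ row_free B, (B == W)%MS & is_diag_mx (B *m G *m B^T)].

Definition sig_in_basis (G : 'M[R]_n) (k : nat) (B : 'M[R]_(k, n)) : int :=
  let D := B *m G *m B^T in
  (#|[set i : 'I_k | 0 < D i i]|%:Z - #|[set i : 'I_k | D i i < 0]|%:Z)%R.

Definition eigsp (A : 'M[R]_n) (l : R) : 'M[R]_n := kermx (A - l%:M).
Definition geneigsp (A : 'M[R]_n) (l : R) : 'M[R]_n := kermx ((A - l%:M) ^+ n).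

End Defs.

(* Main.v *)
Require Import Defs.
From HB Require Import structures.
From mathcomp Require Import all_boot all_order all_algebra.
From mathcomp Require Import reals.
From mathcomp Require Import zify ring.
Set Implicit Arguments. Unset Strict Implicit. Unset Printing Implicit Defensive.
Import Order.TTheory GRing.Theory Num.Theory.
Local Open Scope ring_scope.

Section Ker.
Variables (R : realType) (n : nat) (N : 'M[R]_n).

Definition Kr j : 'M[R]_n := kermx (N ^+ j).
Definition ar j : nat := \rank (Kr j).

Local Notation K := Kr.
Local Notation a := ar.

Lemma expE i j : N ^+ (i + j) = N ^+ i *m N ^+ j.
Proof. by rewrite exprD mulmxE. Qed.

Lemma K_mono i j : (i <= j)%N -> (K i <= K j)%MS.
Proof.
move=> hij; apply/sub_kermxP; rewrite -(subnKC hij) expE mulmxA.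
by rewrite mulmx_ker mul0mx.
Qed.

Lemma a_mono i j : (i <= j)%N -> (a i <= a j)%N.
Proof. by move=> h; apply: mxrankS; apply: K_mono. Qed.

Lemma K_cap_rank j h : (\rank (K j :&: N ^+ h)%MS + a h)%N = a (j + h).
Proof.
have E : (K (j + h) *m N ^+ h :=: K j :&: N ^+ h)%MS.
  apply/eqmxP; rewrite sub_capmx submxMl andbT; apply/andP; split.
    apply/sub_kermxP; rewrite -mulmxA -expE addnC.
    by apply/sub_kermxP; rewrite submx_refl.
  have /submxP[D hD] : ((K j :&: N ^+ h) <= N ^+ h)%MS by apply: capmxSr.
  rewrite hD submxMr //; apply/sub_kermxP.
  rewrite addnC expE mulmxA -hD; apply/sub_kermxP; exact: capmxSl.
rewrite -E /a -(mxrank_mul_ker (K (j + h)) (N ^+ h)).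
have /capmx_idPr -> // : (K h <= K (j + h))%MS by apply: K_mono; rewrite leq_addl.
Qed.
End Ker.

Section Ker2.
Variables (R : realType) (n : nat) (N : 'M[R]_n).
Local Notation a := (ar N).
Local Notation K := (Kr N).

Lemma a_conc i : (a i.+2 + a i <= 2 * a i.+1)%N.
Proof.
have h1 := K_cap_rank N 1 i.+1.
have h2 := K_cap_rank N 1 i.
have : (\rank (K 1 :&: N ^+ i.+1)%MS <= \rank (K 1 :&: N ^+ i)%MS)%N.
  apply: mxrankS; apply: capmxS => //; rewrite exprS -mulmxE; exact: submxMl.
rewrite !add1n in h1 h2; lia.
Qed.

Lemma a_le_n i : (a i <= n)%N.
Proof. exact: rank_leq_row. Qed.

Lemma a_stab m : a (n + m) = a n.
Proof.
have mono i : (a i <= a i.+1)%N by apply: a_mono.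
have cdec : forall i j, (i <= j)%N -> (a j.+1 - a j <= a i.+1 - a i)%N.
  move=> i j /subnKC <-; elim: (j - i)%N => [|k IH]; first by rewrite addn0.
  have := a_conc (i + k); have := mono (i + k)%N; have := mono (i + k).+1.
  rewrite !addnS in IH *; lia.
have cn : a n.+1 = a n.
  apply/eqP; rewrite eqn_leq mono andbT; case: leqP => // hlt; exfalso.
  have big : forall i, (i <= n.+1)%N -> (i <= a i)%N.
    elim=> [//|i IH] hi; have := cdec i n; have := IH (ltnW hi).
    have := mono i; rewrite -ltnS in hi; move=> *; lia.
  have := big n.+1 (leqnn _); have := a_le_n n.+1; lia.
elim: m => [|m IH]; first by rewrite addn0.
have := cdec n (n + m)%N (leq_addr _ _); have := mono (n + m)%N.
rewrite addnS; lia.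
Qed.
End Ker2.

Section Form.
Variables (R : realType) (n : nat) (G N : 'M[R]_n).
Hypothesis HGt : G^T = G.
Hypothesis HNG : N *m G = G *m N^T.
Local Notation a := (ar N).
Local Notation K := (Kr N).

Lemma pow_sym j : N ^+ j *m G = G *m (N ^+ j)^T.
Proof.
elim: j => [|j IH]; first by rewrite expr0 -[1]/(1%:M) trmx1 mul1mx mulmx1.
rewrite exprS -mulmxE -mulmxA IH mulmxA HNG -mulmxA -trmx_mul.
congr (_ *m trmx _); by rewrite mulmxE -exprSr exprS.
Qed.

Lemma bform_shift j (x y : 'rV[R]_n) :
  bform G (x *m N ^+ j) y = bform G x (y *m N ^+ j).
Proof. by rewrite /bform -[x *m _ *m G]mulmxA pow_sym trmx_mul !mulmxA. Qed.

Lemma bformDr (x y z : 'rV[R]_n) : bform G x (y + z) = bform G x y + bform G x z.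
Proof. by rewrite /bform linearD /= mulmxDr mxE. Qed.

Lemma bform0l (y : 'rV[R]_n) : bform G 0 y = 0.
Proof. by rewrite /bform !mul0mx mxE. Qed.

Lemma fitting (y : 'rV[R]_n) : exists w z, (w <= K n)%MS /\ y = w + z *m N ^+ n.
Proof.
have cap0 : (K n :&: N ^+ n)%MS == 0.
  rewrite -mxrank_eq0; have := K_cap_rank N n n; rewrite a_stab; lia.
have full : (1%:M <= K n + N ^+ n)%MS.
  have := mxrank_leqif_sup (submx1 (K n + N ^+ n)%MS).
  move=> [_ <-]; apply/eqP.
  have := mxrank_sum_cap (K n) (N ^+ n); rewrite (eqP cap0) mxrank0 addn0.
  rewrite mxrank1 /Kr mxrank_ker => ->.
  by rewrite subnK // rank_leq_col.
have /sub_addsmxP [[u1 u2] /= ->] := submx_trans (submx1 y) full.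
exists (u1 *m K n), u2; split => //; exact: submxMl.
Qed.

Lemma nondeg_W (Gu : G \in unitmx) (x : 'rV[R]_n) : (x <= K n)%MS ->
  (forall w : 'rV[R]_n, (w <= K n)%MS -> bform G x w = 0) -> x = 0.
Proof.
move=> xW hx.
have h : forall y : 'rV[R]_n, bform G x y = 0.
  move=> y; have [w [z [wW ->]]] := fitting y.
  rewrite bformDr hx // add0r -bform_shift.
  have -> : x *m N ^+ n = 0 by apply/sub_kermxP.
  exact: bform0l.
have xG0 : x *m G = 0.
  apply/rowP => j; have := h (delta_mx 0 j).
  rewrite /bform trmx_delta -colE.
  by rewrite [col _ _ _ _]mxE => ->; rewrite mxE.
by rewrite -(mulmxK Gu x) xG0 mul0mx.
Qed.


Definition Mh h : 'M[R]_n := (K h :&: N ^+ h)%MS.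
Definition L : 'M[R]_n := (\sum_(h < n.+1) Mh h)%MS.

Lemma Mh_iso_le i j : (i <= j)%N -> Mh i *m G *m (Mh j)^T = 0.
Proof.
move=> hij.
have /submxP [D ->] : (Mh j <= N ^+ j)%MS by apply: capmxSr.
rewrite trmx_mul mulmxA -[Mh i *m G *m _]mulmxA -pow_sym mulmxA.
have -> : Mh i *m N ^+ j = 0.
  apply/sub_kermxP; apply: (submx_trans (capmxSl _ _)); exact: K_mono.
by rewrite !mul0mx.
Qed.

Lemma Mh_iso i j : Mh i *m G *m (Mh j)^T = 0.
Proof.
case: (leqP i j) => [|/ltnW] h; first exact: Mh_iso_le.
have := Mh_iso_le h => /(congr1 trmx).
by rewrite !trmx_mul trmxK HGt trmx0 mulmxA.
Qed.

Lemma L_iso (x y : 'rV[R]_n) : (x <= L)%MS -> (y <= L)%MS -> bform G x y = 0.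
Proof.
move=> /sub_sumsmxP [u ->] /sub_sumsmxP [v ->].
rewrite /bform mulmx_suml mulmx_suml summxE big1 // => i _.
rewrite raddf_sum mulmx_sumr summxE big1 // => j _.
rewrite /= trmx_mul -!mulmxA [Mh i *m _]mulmxA [Mh i *m G *m _]mulmxA Mh_iso.
by rewrite mul0mx mulmx0 mxE.
Qed.

Lemma L_sub : (L <= K n)%MS.
Proof.
apply/sumsmx_subP => i _; apply: (submx_trans (capmxSl _ _)).
by apply: K_mono; rewrite -ltnS.
Qed.

Lemma L_rank : (a n <= 2 * \rank L + a 1)%N.
Proof.
have inv : forall m, (m <= n)%N ->
    (a (m + m).+1 <= 2 * \rank (L :&: K m)%MS + a 1)%N.
  elim=> [|m IH] hm; first by rewrite leq_addl.
  have := IH (ltnW hm).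
  have hX := K_cap_rank N m.+1 m.+1.
  have hY := K_cap_rank N m m.+1.
  have hc := a_conc N (m + m).+1.
  set X := Mh m.+1.
  have XL : (X <= L)%MS by apply: (sumsmx_sup (Ordinal (hm : m.+1 < n.+1)%N)).
  have le1 : (\rank (X + (L :&: K m))%MS <= \rank (L :&: K m.+1)%MS)%N.
    apply: mxrankS; rewrite addsmx_sub !sub_capmx XL capmxSl /=.
    rewrite (submx_trans (capmxSr _ _) (K_mono N (leqnSn m))).
    by rewrite capmxSl.
  have le2 : (\rank (X :&: (L :&: K m))%MS <= \rank (K m :&: N ^+ m.+1)%MS)%N.
    apply: mxrankS; rewrite sub_capmx.
    rewrite (submx_trans (capmxSr _ _) (capmxSr _ _)).
    by rewrite (submx_trans (capmxSl _ _) (capmxSr _ _)).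
  have := mxrank_sum_cap X (L :&: K m)%MS.
  rewrite !addSn !addnS in hX hY hc *.
  rewrite /X /Mh in le1 le2 *.
  lia.
have := inv n (leqnn n).
have := a_mono N (leq_trans (leq_addr n n) (leqnSn _) : (n <= (n + n).+1)%N).
have : (\rank (L :&: K n)%MS <= \rank L)%N by apply: mxrankS; apply: capmxSl.
lia.
Qed.

End Form.

Section Sylv.
Variables (R : realType) (n : nat) (G : 'M[R]_n).

Lemma posdef_diag p (Dm : 'M[R]_p) (c : 'rV[R]_p) :
  (forall i j, i != j -> Dm i j = 0) -> (forall i, 0 < Dm i i) ->
  (c *m Dm *m c^T) 0 0 = 0 -> c = 0.
Proof.
move=> hoff hpos.
have E : (c *m Dm *m c^T) 0 0 = \sum_j Dm j j * c 0 j ^+ 2.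
  rewrite mxE; apply: eq_bigr => j _; rewrite mxE (bigD1 j) //= big1.
    by rewrite addr0 mxE; ring.
  by move=> i hij; rewrite hoff ?mulr0.
rewrite E => h0; apply/rowP => j; rewrite mxE.
have := psumr_eq0P (P := predT) (fun i _ => mulr_ge0 (ltW (hpos i)) (sqr_ge0 (c 0 i))) h0 (i := j) isT.
by move/eqP; rewrite mulf_eq0 sqrf_eq0 (gt_eqF (hpos j)) /= => /eqP.
Qed.

Lemma sylv k p (B : 'M[R]_(k, n)) (W Lm : 'M[R]_n) (f : 'I_p -> 'I_k) :
  injective f -> (B <= W)%MS -> (Lm <= W)%MS -> is_diag_mx (B *m G *m B^T) ->
  (forall i, 0 < (B *m G *m B^T) (f i) (f i)) ->
  (forall x y : 'rV[R]_n, (x <= Lm)%MS -> (y <= Lm)%MS -> bform G x y = 0) ->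
  (p + \rank Lm <= \rank W)%N.
Proof.
move=> finj BW LW /is_diag_mxP Ddiag Dpos Liso.
set P := rowsub f B.
have PGP : P *m G *m P^T = mxsub f f (B *m G *m B^T).
  rewrite /P trmx_mxsub !mul_rowsub_mx mulmx_colsub.
  by apply/matrixP => i j; rewrite !mxE.
have pd : forall c : 'rV[R]_p, bform G (c *m P) (c *m P) = 0 -> c = 0.
  move=> c; rewrite /bform trmx_mul !mulmxA.
  have -> : c *m P *m G *m P^T = c *m (P *m G *m P^T) by rewrite !mulmxA.
  rewrite PGP.
  apply: posdef_diag => [i j hij|i]; rewrite mxE.
    by apply: Ddiag; rewrite (inj_eq val_inj) (inj_eq finj).
  exact: Dpos.
have rP : \rank P = p.
  apply/eqP; rewrite -[_ == _]/(row_free P) -kermx_eq0; apply/eqP/row_matrixP => i.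
  rewrite row0; apply: pd; have -> : row i (kermx P) *m P = 0.
    by rewrite -row_mul mulmx_ker row0.
  by rewrite /bform !mul0mx mxE.
have cap0 : (P :&: Lm)%MS = 0.
  apply/row_matrixP => i; rewrite row0.
  have /submxP [c hc] : (row i (P :&: Lm)%MS <= P)%MS.
    exact: submx_trans (row_sub _ _) (capmxSl _ _).
  have rL : (row i (P :&: Lm)%MS <= Lm)%MS.
    exact: submx_trans (row_sub _ _) (capmxSr _ _).
  have := Liso _ _ rL rL; rewrite hc => /pd ->; by rewrite mul0mx.
have := mxrank_sum_cap P Lm; rewrite cap0 mxrank0 addn0 rP => <-.
by apply: mxrankS; rewrite addsmx_sub LW (submx_trans (rowsub_sub _ _) BW).
Qed.
End Sylv.

Lemma deltaE (R : realType) n (M : 'M[R]_n) i j :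
  ((delta_mx 0 i : 'rV[R]_n) *m M *m (delta_mx 0 j : 'rV[R]_n)^T) 0 0 = M i j.
Proof. by rewrite trmx_delta -rowE -colE [col _ _ _ _]mxE mxE. Qed.

Lemma gsym_mx (R : realType) n (G A : 'M[R]_n) :
  g_symmetric G A -> A *m G = G *m A^T.
Proof.
move=> h; apply/matrixP => i j.
have := h (delta_mx 0 i) (delta_mx 0 j); rewrite /bform trmx_mul !mulmxA.
by rewrite -[delta_mx 0 i *m A *m G]mulmxA deltaE -[delta_mx 0 i *m G *m A^T]mulmxA deltaE.
Qed.

Lemma nilp_stab (R : realType) n (N : 'M[R]_n) :
  ar N 2 = ar N 1 -> ar N n = ar N 1.
Proof.
move=> h21.
have step : forall m, ar N m.+2 = ar N m.+1.
  elim=> [//|m IH]; have := a_conc N m.+1; have := a_mono N (leqnSn m.+2).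
  rewrite IH; lia.
have all1 : forall m, ar N m.+1 = ar N 1.
  by elim=> [//|m IH]; rewrite step.
case: n N h21 step all1 => [|n'] N _ _ all1; last exact: all1.
by rewrite /ar; have := rank_leq_row (Kr N 0); have := rank_leq_row (Kr N 1); lia.
Qed.

Theorem corollary2p6 (R : realType) (n : nat) (G A : 'M[R]_n) (l : R) :
  nondeg_sym_form G -> g_symmetric G A -> eigenvalue A l ->
  (forall (k : nat) (B : 'M[R]_(k, n)), diag_basis G (geneigsp A l) B ->
     `|sig_in_basis G B| <= (\rank (eigsp A l))%:Z)
  /\
  (nondeg_on G (eigsp A l) <-> \rank (geneigsp A l) = \rank (eigsp A l)).
Proof.
move=> [HGt Gu] Hsym _.
set N := A - l%:M.
have HNG : N *m G = G *m N^T.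
  rewrite /N mulmxBl linearB /= mulmxBr (gsym_mx Hsym) tr_scalar_mx.
  by rewrite scalar_mxC.
have eW : geneigsp A l = Kr N n by [].
have eK : eigsp A l = Kr N 1 by rewrite /Kr expr1.
rewrite eW eK; split.
  move=> k B [Bfree BWb Bdiag].
  set D := B *m G *m B^T.
  have /andP [BW' WB] := BWb.
  have D0 : forall i, D i i != 0.
    move=> i; apply/negP => /eqP Dii.
    have rB : (row i B <= Kr N n)%MS by apply: submx_trans (row_sub _ _) BW'.
    have := nondeg_W HNG Gu rB.
    have h : forall w : 'rV[R]_n, (w <= Kr N n)%MS -> bform G (row i B) w = 0.
      move=> w wW; have /submxP [c ->] := submx_trans wW WB.
      rewrite /bform trmx_mul !mulmxA -!row_mul -/D.
      rewrite [row _ _ _ _]mxE [(D *m _) _ _]mxE big1 // => j _.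
      case: (eqVneq i j) => [<-|hij]; first by rewrite Dii mul0r.
      by move/is_diag_mxP: Bdiag => ->; rewrite ?mul0r.
    move=> /(_ h) /eqP; rewrite rowE mulmx_free_eq0 //.
    by move/eqP/matrixP/(_ 0 i); rewrite !mxE !eqxx /= => /eqP; rewrite oner_eq0.
  set Sp := [set i | 0 < D i i]; set Sn := [set i | D i i < 0].
  have hpq : (#|Sp| + #|Sn| = k)%N.
    have -> : Sn = ~: Sp.
      apply/setP => i; rewrite !inE ltNge le_eqVlt eq_sym (negbTE (D0 i)).
      by [].
    by rewrite cardsC card_ord.
  have rBk : \rank B = k by apply/eqP.
  have rWk : \rank (Kr N n) = k by rewrite -rBk; apply/eqP; rewrite eqn_leq !mxrankS.
  have LW := L_sub N.
  have hp : (#|Sp| + \rank (L N) <= \rank (Kr N n))%N.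
    apply: (@sylv _ _ G k #|Sp| B _ _ (@enum_val _ (mem Sp))) => //.
    - exact: enum_val_inj.
    - by move=> i; have := enum_valP i; rewrite inE.
    - by move=> x y; apply: L_iso.
  have hn : (#|Sn| + \rank (L N) <= \rank (Kr N n))%N.
    apply: (@sylv _ _ (- G) k #|Sn| B _ _ (@enum_val _ (mem Sn))) => //.
    - exact: enum_val_inj.
    - rewrite mulmxN mulNmx; move/is_diag_mxP: Bdiag => Bd.
      by apply/is_diag_mxP => i j hij; rewrite mxE Bd ?oppr0.
    - move=> i; have := enum_valP i; rewrite inE mulmxN mulNmx => h; rewrite [X in 0 < X]mxE oppr_gt0; exact: h.
    - move=> x y hx hy; rewrite /bform mulmxN mulNmx mxE.
      by have := L_iso HGt HNG hx hy; rewrite /bform => ->; rewrite oppr0.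
  have hr := L_rank N.
  rewrite /sig_in_basis -/D -/Sp -/Sn.
  rewrite /ar in hr; move: hp hn hr hpq; rewrite rWk.
  move: #|Sp| #|Sn| (\rank (L N)) (\rank (Kr N 1)) => x y z w h1 h2 h3 h4.
  rewrite ler_norml; apply/andP; split; rewrite -subr_ge0; lia.
have sub1n : (Kr N 1 <= Kr N n)%MS.
  case: (posnP n) => [n0|npos]; last exact: K_mono.
  have h := rank_leq_col (Kr N 1).
  have : \rank (Kr N 1) == 0%N by apply/eqP; lia.
  by rewrite mxrank_eq0 => /eqP ->; rewrite sub0mx.
split.
  move=> hnd.
  have K21 : (Kr N 2 <= Kr N 1)%MS.
    apply/row_subP => i; set x := row i (Kr N 2).
    have xK : (x <= Kr N 2)%MS by apply: row_sub.
    have yK : (x *m N ^+ 1 <= Kr N 1)%MS.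
      by apply/sub_kermxP; rewrite -mulmxA -expE; apply/sub_kermxP.
    have := hnd _ yK.
    have h : forall w : 'rV[R]_n, (w <= Kr N 1)%MS -> bform G (x *m N ^+ 1) w = 0.
      move=> w /sub_kermxP wK; rewrite (bform_shift HNG) wK.
      by rewrite /bform trmx0 mulmx0 mxE.
    by move=> /(_ h) hx0; apply/sub_kermxP.
  apply: nilp_stab; apply/eqP; rewrite eqn_leq mxrankS //.
  exact: mxrankS (K_mono N (isT : (1 <= 2)%N)).
move=> hr v vK hv.
have n1 : (Kr N n <= Kr N 1)%MS.
  by have := mxrank_leqif_sup sub1n => -[_ <-]; rewrite hr.
apply: (nondeg_W HNG Gu (submx_trans vK sub1n)) => w wK.
by apply: hv; apply: submx_trans wK n1.
Qed.
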